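(* In the full-duplex filter-and-forward relay setting described in the context, the maximum achievable rate $$C=\max_{P(f)\ge 0,\ \Theta(f)}\ \frac{1}{2W}\int_{\Omega}\log_2\left(1+\frac{\left|H_{\rm SD}(f)+\frac{H_{\rm RD}(f)H_{\rm SR}(f)\Theta(f)}{1-\hat\alpha(f)\Theta(f)}\right|^2P(f)}{\left(\left|\frac{H_{\rm RD}(f)\Theta(f)}{1-\hat\alpha(f)\Theta(f)}\right|^2+1\right)N_0}\right)\mathrm{d}f$$ subject to $\int_\Omega P(f)\,\mathrm{d}f\le\bar P$ and $\int_\Omega\left|\frac{\Theta(f)}{1-\hat\alpha(f)\Theta(f)}\right|^2\left(|H_{\rm SR}(f)|^2P(f)+N_0\right)\mathrm{d}f\le\bar Q$ does not depend on the loop-back channel coefficient $\alpha$ nor on the loop-back delay $\tau$; specifically, it equals the optimal value of $$\max_{P(f)\ge0,\ \bar\Xi(f)\ge0}\ \frac{1}{2W}\int_\Omega\log_2\left(1+\frac{\left(|H_{\rm SD}(f)|+|H_{\rm RD}(f)H_{\rm SR}(f)|\bar\Xi(f)\right)^2P(f)}{\left(|H_{\rm RD}(f)|^2\bar\Xi(f)^2+1\right)N_0}\right)\mathrm{d}f$$ subject to $\int_\Omega P(f)\,\mathrm{d}f\le\bar P$ and $\int_\Omega \bar\Xi(f)^2\left(|H_{\rm SR}(f)|^2P(f)+N_0\right)\mathrm{d}f\le\bar Q$.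
   Context: $\Omega=[f_c-W/2,f_c+W/2]$ is the system band with bandwidth $W>0$. $H_{\rm SD}(f),H_{\rm SR}(f),H_{\rm RD}(f)$ are the (time-invariant, known) frequency responses of the source–destination, source–relay and relay–destination channels; $P(f)$ is the source transmit power spectral density; $\Theta(f)$ is the frequency response of the relay's analog filter (arbitrarily designable); the relay's received signal is $r(t)=h_{\rm SR}(t)\otimes s(t)+\alpha x(t-\tau)+n_{\rm R}(t)$ and its transmitted signal is $x(t)=\theta(t)\otimes r(t)$, with loop-back coefficient $\alpha<1$ and delay $\tau>0$; $\hat\alpha(f)=\alpha\exp(-j2\pi\tau f)$. Noises at relay and destination have constant power spectral density $N_0>0$; $\bar P,\bar Q$ are the source and relay power budgets. *)

(* Defs.v *)
From HB Require Import structures.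
From mathcomp Require Import all_boot all_algebra.
From mathcomp Require Import all_classical all_reals all_analysis.
From mathcomp Require Import complex.
Set Implicit Arguments. Unset Strict Implicit. Unset Printing Implicit Defensive.
Import GRing.Theory Num.Theory.
Local Open Scope classical_set_scope.
Local Open Scope ring_scope.

Section FFRelay.
Variable R : realType.

Definition cre (z : R[i]) : R := complex.Re z.
Definition cim (z : R[i]) : R := complex.Im z.
Definition sqmod (z : R[i]) : R := cre z ^+ 2 + cim z ^+ 2.

Definition cmeasurable (D : set R) (g : R -> R[i]) : Prop :=
  measurable_fun D (cre \o g) /\ measurable_fun D (cim \o g).

Definition log2 (x : R) : R := ln x / ln 2.

Definition Omega (fc W : R) : set R := `[fc - W / 2, fc + W / 2]%classic.

(* loop-back frequency response alpha * exp(-j 2 pi tau f) *)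
Definition ahat (alpha tau f : R) : R[i] :=
  Complex (alpha * cos (- (2 * pi * tau * f))) (alpha * sin (- (2 * pi * tau * f))).

Definition effTheta (alpha tau : R) (Theta : R -> R[i]) (f : R) : R[i] :=
  Theta f / (1 - ahat alpha tau f * Theta f).

Definition loop_ok (alpha tau : R) (Theta : R -> R[i]) (f : R) : Prop :=
  1 - ahat alpha tau f * Theta f != 0.

Local Open Scope ereal_scope.

Definition integ (D : set R) (g : R -> R) : \bar R :=
  \int[@lebesgue_measure R]_(x in D) (g x)%:E.

Definition rate_orig (fc W N0 : R) (Hsd Hsr Hrd : R -> R[i]) (alpha tau : R)
    (P : R -> R) (Theta : R -> R[i]) : \bar R :=
  (1 / (2 * W))%:E *
  integ (Omega fc W) (fun f =>
    log2 (1 + sqmod (Hsd f + Hrd f * Hsr f * effTheta alpha tau Theta f) * P f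
              / ((sqmod (Hrd f * effTheta alpha tau Theta f) + 1) * N0))%R).

Definition feasible_orig (fc W N0 Pbar Qbar : R) (Hsr : R -> R[i]) (alpha tau : R)
    (P : R -> R) (Theta : R -> R[i]) : Prop :=
  [/\ measurable_fun (Omega fc W) P,
      cmeasurable (Omega fc W) Theta,
      (forall f, Omega fc W f -> (0 <= P f)%R /\ loop_ok alpha tau Theta f),
      integ (Omega fc W) P <= Pbar%:E &
      integ (Omega fc W) (fun f => sqmod (effTheta alpha tau Theta f)
                                  * (sqmod (Hsr f) * P f + N0))%R <= Qbar%:E].

Definition C_orig (fc W N0 Pbar Qbar : R) (Hsd Hsr Hrd : R -> R[i]) (alpha tau : R)
    : \bar R :=
  ereal_sup [set rate_orig fc W N0 Hsd Hsr Hrd alpha tau PT.1 PT.2 |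
             PT in [set PT : (R -> R) * (R -> R[i]) |
                    feasible_orig fc W N0 Pbar Qbar Hsr alpha tau PT.1 PT.2]].

Definition rate_new (fc W N0 : R) (Hsd Hsr Hrd : R -> R[i])
    (P Xb : R -> R) : \bar R :=
  (1 / (2 * W))%:E *
  integ (Omega fc W) (fun f =>
    log2 (1 + (Num.sqrt (sqmod (Hsd f)) + Num.sqrt (sqmod (Hrd f * Hsr f)) * Xb f) ^+ 2 * P f
              / ((sqmod (Hrd f) * Xb f ^+ 2 + 1) * N0))%R).

Definition feasible_new (fc W N0 Pbar Qbar : R) (Hsr : R -> R[i])
    (P Xb : R -> R) : Prop :=
  [/\ measurable_fun (Omega fc W) P,
      measurable_fun (Omega fc W) Xb,
      (forall f, Omega fc W f -> (0 <= P f)%R /\ (0 <= Xb f)%R),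
      integ (Omega fc W) P <= Pbar%:E &
      integ (Omega fc W) (fun f => Xb f ^+ 2 * (sqmod (Hsr f) * P f + N0))%R <= Qbar%:E].

Definition C_new (fc W N0 Pbar Qbar : R) (Hsd Hsr Hrd : R -> R[i]) : \bar R :=
  ereal_sup [set rate_new fc W N0 Hsd Hsr Hrd PX.1 PX.2 |
             PX in [set PX : (R -> R) * (R -> R) |
                    feasible_new fc W N0 Pbar Qbar Hsr PX.1 PX.2]].

End FFRelay.

(* Main.v *)
Require Import Defs.
From mathcomp Require Import all_boot all_algebra.
From mathcomp Require Import all_classical all_reals all_analysis.
From mathcomp Require Import measurable_realfun.
From mathcomp Require Import complex.
From mathcomp Require Import ring lra.
Set Implicit Arguments. Unset Strict Implicit. Unset Printing Implicit Defensive.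
Import GRing.Theory Num.Theory order.Order.TTheory numFieldNormedType.Exports.
Local Open Scope classical_set_scope.
Local Open Scope ring_scope.

Section Meas.
Variable R : realType.
Implicit Types (D : set R).

Lemma m_inv_T : measurable_fun [set: R] (fun x : R => x^-1).
Proof.
have -> : [set: R] = ~` [set 0] `|` [set 0] by rewrite setvU.
apply/measurable_funU.
- by apply: measurableC.
- by [].
split.
- apply: open_continuous_measurable_fun.
  + apply: closed_openC; apply: compact_closed; [exact: Rhausdorff|exact: compact_set1].
  + move=> x; rewrite inE /= => /eqP x0; exact: inv_continuous.
- have mc : measurable_fun [set (0:R)] (cst (0:R)) by exact: measurable_cst.
  move: mc; apply: eq_measurable_fun.
  by move=> x; rewrite inE /= => ->; rewrite invr0.
Qed.

Lemma m_inv D (g : R -> R) : measurable_fun D g -> measurable_fun D (fun x => (g x)^-1).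
Proof. move=> mg; exact: (measurableT_comp m_inv_T mg). Qed.

Lemma m_sqrt D (g : R -> R) : measurable_fun D g -> measurable_fun D (fun x => Num.sqrt (g x)).
Proof. move=> mg; exact: (measurableT_comp (continuous_measurable_fun (@sqrt_continuous R)) mg). Qed.

Lemma m_log2 D (g : R -> R) : measurable_fun D g -> measurable_fun D (fun x => log2 (g x)).
Proof.
move=> mg; rewrite /log2; apply: measurable_funM; last exact: measurable_cst.
exact: (measurableT_comp (@measurable_ln R) mg).
Qed.

Lemma cm_add D g h : cmeasurable D g -> cmeasurable D h -> cmeasurable D (fun x => g x + h x).
Proof.
move=> [g1 g2] [h1 h2]; split.
- have -> : @cre R \o (fun x => g x + h x) = (fun x => cre (g x) + cre (h x)).
    by apply: funext => x /=; case: (g x) => a b; case: (h x).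
  exact: measurable_funD.
- have -> : @cim R \o (fun x => g x + h x) = (fun x => cim (g x) + cim (h x)).
    by apply: funext => x /=; case: (g x) => a b; case: (h x).
  exact: measurable_funD.
Qed.

Lemma cm_opp D g : cmeasurable D g -> cmeasurable D (fun x => - g x).
Proof.
move=> [g1 g2]; split.
- have -> : @cre R \o (fun x => - g x) = (fun x => - cre (g x)).
    by apply: funext => x /=; case: (g x).
  exact: measurable_funN.
- have -> : @cim R \o (fun x => - g x) = (fun x => - cim (g x)).
    by apply: funext => x /=; case: (g x).
  exact: measurable_funN.
Qed.

Lemma cm_mul D g h : cmeasurable D g -> cmeasurable D h -> cmeasurable D (fun x => g x * h x).
Proof.
move=> [g1 g2] [h1 h2]; split.
- have -> : @cre R \o (fun x => g x * h x) = (fun x => cre (g x) * cre (h x) - cim (g x) * cim (h x)).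
    by apply: funext => x /=; case: (g x) => a b; case: (h x).
  by apply: measurable_funB; apply: measurable_funM.
- have -> : @cim R \o (fun x => g x * h x) = (fun x => cre (g x) * cim (h x) + cim (g x) * cre (h x)).
    by apply: funext => x /=; case: (g x) => a b; case: (h x).
  by apply: measurable_funD; apply: measurable_funM.
Qed.

Lemma sqmodE (a b : R) : sqmod (Complex a b) = a ^+ 2 + b ^+ 2.
Proof. by []. Qed.

Lemma m_sqmod D g : cmeasurable D g -> measurable_fun D (fun x => sqmod (g x)).
Proof.
move=> [g1 g2]; rewrite /sqmod.
by apply: measurable_funD; apply: measurable_funX.
Qed.

Lemma cm_inv D g : cmeasurable D g -> cmeasurable D (fun x => (g x)^-1).
Proof.
move=> mg; have [g1 g2] := mg; have ms := m_inv (m_sqmod mg); split.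
- have -> : @cre R \o (fun x => (g x)^-1) = (fun x => cre (g x) * (sqmod (g x))^-1).
    by apply: funext => x /=; case: (g x).
  exact: measurable_funM.
- have -> : @cim R \o (fun x => (g x)^-1) = (fun x => - (cim (g x) * (sqmod (g x))^-1)).
    by apply: funext => x /=; case: (g x).
  by apply: measurable_funN; exact: measurable_funM.
Qed.

Lemma cm_real D (r : R -> R) : measurable_fun D r -> cmeasurable D (fun x => Complex (r x) 0).
Proof. by move=> mr; split => //; exact: measurable_cst. Qed.

Lemma cm_cst D (c : R[i]) : cmeasurable D (fun _ => c).
Proof. by split; exact: measurable_cst. Qed.

Lemma cm_conj D g : cmeasurable D g -> cmeasurable D (fun x => Complex (cre (g x)) (- cim (g x))).
Proof. by move=> [g1 g2]; split => //; exact: measurable_funN. Qed.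

Lemma cm_ahat D (alpha tau : R) : cmeasurable D (ahat alpha tau).
Proof.
have ml : measurable_fun D (fun f : R => - (2 * pi * tau * f)).
  by apply: measurable_funN; apply: measurable_funM; [exact: measurable_cst|exact: measurable_id].
split.
- apply: measurable_funM; first exact: measurable_cst.
  exact: (measurableT_comp (continuous_measurable_fun (@continuous_cos R)) ml).
- apply: measurable_funM; first exact: measurable_cst.
  exact: (measurableT_comp (continuous_measurable_fun (@continuous_sin R)) ml).
Qed.

End Meas.

Section Alg.
Variable R : realType.
Implicit Types (z w a K : R[i]).

Definition rc (r : R) : R[i] := Complex r 0.
Definition nrm z : R := Num.sqrt (sqmod z).
Definition cj z : R[i] := Complex (cre z) (- cim z).

Lemma sqmod_ge0 z : 0 <= sqmod z.
Proof. by rewrite /sqmod addr_ge0 // sqr_ge0. Qed.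

Lemma nrm_ge0 z : 0 <= nrm z.
Proof. exact: sqrtr_ge0. Qed.

Lemma nrm_sqr z : nrm z ^+ 2 = sqmod z.
Proof. by rewrite sqr_sqrtr // sqmod_ge0. Qed.

Lemma sqmodM z w : sqmod (z * w) = sqmod z * sqmod w.
Proof. case: z => a b; case: w => c d. rewrite /sqmod /cre /cim /=. ring. Qed.

Lemma nrmM z w : nrm (z * w) = nrm z * nrm w.
Proof. by rewrite /nrm sqmodM sqrtrM // sqmod_ge0. Qed.

Lemma sqmod_rc r : sqmod (rc r) = r ^+ 2.
Proof. rewrite /sqmod /cre /cim /=; ring. Qed.

Lemma sqmod_cj z : sqmod (cj z) = sqmod z.
Proof. case: z => a b; rewrite /sqmod /cre /cim /=; ring. Qed.

Lemma mul_cj z : z * cj z = rc (sqmod z).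
Proof. case: z => a b; rewrite /cj /rc /sqmod /cre /cim /=; simpc; congr Complex; ring. Qed.

Lemma rcM r s : rc (r * s) = rc r * rc s.
Proof. rewrite /rc /=; simpc; congr Complex; ring. Qed.

Lemma rcD r s : rc (r + s) = rc r + rc s.
Proof. rewrite /rc /=; simpc; congr Complex; ring. Qed.

Lemma rc1 : rc 1 = 1.
Proof. by []. Qed.

Lemma rc0 : rc 0 = 0.
Proof. by []. Qed.

Lemma sqmod_eq0 z : sqmod z = 0 -> z = 0.
Proof.
case: z => a b; rewrite /sqmod /cre /cim /= => h.
have ha : a = 0 by apply/eqP; rewrite -sqrf_eq0; apply/eqP; nra.
have hb : b = 0 by apply/eqP; rewrite -sqrf_eq0; apply/eqP; nra.
by rewrite ha hb.
Qed.

Lemma tri z w : sqmod (z + w) <= (nrm z + nrm w) ^+ 2.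
Proof.
have e : (nrm z + nrm w) ^+ 2 = sqmod z + sqmod w + 2 * (nrm z * nrm w).
  by rewrite sqrrD !nrm_sqr; ring.
rewrite e; clear e; case: z => a b; case: w => c d.
rewrite /nrm -sqrtrM ?sqmod_ge0 // /sqmod /cre /cim /=.
set c0 := a * c + b * d.
have h1 : c0 <= Num.sqrt ((a ^+ 2 + b ^+ 2) * (c ^+ 2 + d ^+ 2)).
  have hc : c0 ^+ 2 <= (a ^+ 2 + b ^+ 2) * (c ^+ 2 + d ^+ 2).
    have -> : (a ^+ 2 + b ^+ 2) * (c ^+ 2 + d ^+ 2) = c0 ^+ 2 + (a * d - b * c) ^+ 2 by rewrite /c0; ring.
    by rewrite lerDl sqr_ge0.
  have P0 : 0 <= (a ^+ 2 + b ^+ 2) * (c ^+ 2 + d ^+ 2) by apply: mulr_ge0; apply: addr_ge0; apply: sqr_ge0.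
  apply: (le_trans (ler_norm c0)); rewrite -sqrtr_sqr ler_sqrt //.
move: h1; rewrite /c0 => h1; nra.
Qed.

Definition ualign a K : R[i] :=
  let w := a * cj K in
  w * rc ((nrm w)^-1) + rc (1 - nrm w * (nrm w)^-1).

Lemma sqmod_ualign a K : sqmod (ualign a K) = 1.
Proof.
rewrite /ualign; set w := a * cj K.
have [w0|w0] := eqVneq (nrm w) 0.
  by rewrite w0 invr0 !mulr0 subr0 add0r sqmod_rc expr1n.
rewrite mulfV // subrr addr0 sqmodM sqmod_rc -nrm_sqr.
by rewrite exprVn mulfV // expf_neq0.
Qed.

Lemma align a K s : 0 <= s ->
  sqmod (a + K * (ualign a K * rc s)) = (nrm a + nrm K * s) ^+ 2.
Proof.
move=> s0; rewrite /ualign; set w := a * cj K.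
have nw : nrm w = nrm a * nrm K by rewrite /w nrmM /nrm sqmod_cj.
have [w0|w0] := eqVneq (nrm w) 0.
  rewrite w0 invr0 !mulr0 subr0 add0r rc1 mul1r.
  move: w0; rewrite nw => /eqP; rewrite mulf_eq0 => /orP[] /eqP h.
  - have {}h : nrm a = 0 :> R := h.
    have a0 : a = 0 by apply: sqmod_eq0; rewrite -(nrm_sqr a) h expr0n.
    by rewrite h a0 add0r sqmodM sqmod_rc -nrm_sqr; ring.
  - have {}h : nrm K = 0 :> R := h.
    have K0 : K = 0 by apply: sqmod_eq0; rewrite -(nrm_sqr K) h expr0n.
    by rewrite h K0 mul0r addr0 mul0r addr0 nrm_sqr.
rewrite mulfV // subrr addr0.
have na : nrm a != 0 by move: w0; rewrite nw mulf_eq0 negb_or => /andP[].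
have nK : nrm K != 0 by move: w0; rewrite nw mulf_eq0 negb_or => /andP[].
have -> : a + K * (w * rc (nrm w)^-1 * rc s) = a * rc (1 + nrm K * s / nrm a).
  rewrite /w.
  have -> : K * (a * cj K * rc (nrm w)^-1 * rc s) = a * (K * cj K) * rc (nrm w)^-1 * rc s by ring.
  rewrite mul_cj -nrm_sqr nw -!mulrA -!rcM.
  have -> : nrm K ^+ 2 * ((nrm a * nrm K)^-1 * s) = nrm K * (s / nrm a).
    by field; apply/andP; split.
  by rewrite rcD rc1 mulrDr mulr1.
rewrite sqmodM sqmod_rc -nrm_sqr; field; done.
Qed.

Lemma sqmod_ualign_mul a K z s : sqmod (z * (ualign a K * rc s)) = sqmod z * s ^+ 2.
Proof. by rewrite !sqmodM sqmod_ualign sqmod_rc mul1r. Qed.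

End Alg.

Section Real.
Variable R : realType.

Lemma ln2_gt0 : 0 < ln (2 : R).
Proof. by apply: ln_gt0; rewrite ltr1n. Qed.

Lemma log2_ge0 (x : R) : 0 <= x -> 0 <= log2 (1 + x).
Proof.
move=> x0; rewrite /log2; apply: divr_ge0; last exact: ltW ln2_gt0.
by apply: ln_ge0; rewrite lerDl.
Qed.

Lemma log2_le (x y : R) : 0 <= x -> x <= y -> log2 (1 + x) <= log2 (1 + y).
Proof.
move=> x0 xy; rewrite /log2; apply: ler_wpM2r; first by rewrite invr_ge0 ltW // ln2_gt0.
have h1 : 0 < 1 + x by apply: (lt_le_trans ltr01); rewrite lerDl.
have h2 : 0 < 1 + y by apply: (lt_le_trans ltr01); rewrite lerDl (le_trans x0).
by rewrite ler_ln ?posrE // lerD2l.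
Qed.

Lemma frac_ge0 (S P Dn : R) : 0 <= S -> 0 <= P -> 0 < Dn -> 0 <= S * P / Dn.
Proof. by move=> *; apply: divr_ge0; [apply: mulr_ge0|exact: ltW]. Qed.

Lemma frac_le (S1 S2 P Dn : R) : 0 <= P -> 0 < Dn -> S1 <= S2 -> S1 * P / Dn <= S2 * P / Dn.
Proof.
move=> P0 D0 h; apply: ler_wpM2r; first by rewrite invr_ge0 ltW.
exact: ler_wpM2r.
Qed.

Lemma den_gt0 (Q N0 : R) : 0 <= Q -> 0 < N0 -> 0 < (Q + 1) * N0.
Proof.
move=> Q0 N00; apply: mulr_gt0 => //.
by apply: (lt_le_trans ltr01); rewrite lerDr.
Qed.

Lemma cvg_phi (A B X Q P N0 : R) (s : nat -> R) : 0 <= P -> 0 <= Q -> 0 < N0 ->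
  s n @[n --> \oo] --> (1:R) ->
  log2 (1 + (A + B*(X*s n))^+2 * P / ((Q*(X*s n)^+2 + 1)*N0)) @[n --> \oo] -->
  log2 (1 + (A + B*(X*1))^+2 * P / ((Q*(X*1)^+2 + 1)*N0)).
Proof.
move=> P0 Q0 N00 hs.
have hd : 0 < (Q*(X*1)^+2 + 1)*N0.
  by apply: den_gt0 => //; apply: mulr_ge0 => //; exact: sqr_ge0.
have hpos : 0 < 1 + (A + B*(X*1))^+2 * P / ((Q*(X*1)^+2 + 1)*N0).
  apply: (lt_le_trans ltr01); rewrite lerDl; apply: frac_ge0 => //; exact: sqr_ge0.
rewrite /log2; apply: cvgMr_tmp.
apply: (continuous_cvg _ (continuous_ln hpos)).
apply: cvgD; first exact: cvg_cst.
apply: cvgM.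
  apply: cvgM; last exact: cvg_cst.
  rewrite expr2; under eq_fun do rewrite expr2.
  by apply: cvgM; apply: cvgD; (try exact: cvg_cst); apply: cvgMl_tmp; apply: cvgMl_tmp.
apply: cvgV; first by rewrite gt_eqF.
apply: cvgM; last exact: cvg_cst.
apply: cvgD; last exact: cvg_cst.
apply: cvgMl_tmp.
rewrite expr2; under eq_fun do rewrite expr2.
by apply: cvgM; apply: cvgMl_tmp.
Qed.

Local Open Scope ereal_scope.

Lemma limn_einf_le (u : (\bar R)^nat) (M : \bar R) : (forall n, u n <= M) -> limn_einf u <= M.
Proof.
move=> uM; rewrite limn_einf_lim; apply: lime_le; first exact: is_cvg_einfs.
apply: nearW => n; apply: le_trans (uM n).
by apply: ereal_inf_lbound; exists n => /=.
Qed.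

Lemma limn_einf_cvg (u : (\bar R)^nat) (l : \bar R) : u n @[n --> \oo] --> l -> limn_einf u = l.
Proof.
move=> hu; rewrite limn_einf_lim; apply: cvg_lim; first exact: ereal_hausdorff.
exact: cvg_einfs.
Qed.

End Real.

Section Main.
Variables (R : realType) (fc W N0 Pbar Qbar alpha tau : R) (Hsd Hsr Hrd : R -> R[i]).
Hypotheses (W0 : 0 < W) (N00 : 0 < N0).
Hypotheses (mHsd : cmeasurable (Omega fc W) Hsd) (mHsr : cmeasurable (Omega fc W) Hsr)
  (mHrd : cmeasurable (Omega fc W) Hrd).

Let D := Omega fc W.

Lemma mD : measurable D.
Proof. exact: measurable_itv. Qed.

Lemma integ_ext (g h : R -> R) : {in D, g =1 h} -> integ D g = integ D h.
Proof. by move=> gh; apply: eq_integral => x xD; rewrite gh. Qed.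

Lemma integ_le (g h : R -> R) : measurable_fun D g -> measurable_fun D h ->
  (forall x, D x -> 0 <= g x) -> (forall x, D x -> g x <= h x) ->
  (integ D g <= integ D h)%E.
Proof.
move=> mg mh g0 gh; apply: ge0_le_integral.
- exact: mD.
- by move=> x Dx; rewrite lee_fin g0.
- exact/measurable_EFinP.
- exact/measurable_EFinP.
- by move=> x Dx; rewrite lee_fin gh.
Qed.

Lemma cm_eff (Th : R -> R[i]) : cmeasurable D Th -> cmeasurable D (effTheta alpha tau Th).
Proof.
move=> mT; rewrite /effTheta; apply: cm_mul => //; apply: cm_inv; apply: cm_add.
  exact: cm_cst.
by apply: cm_opp; apply: cm_mul => //; exact: cm_ahat.
Qed.

Definition iorig (P : R -> R) (Th : R -> R[i]) f :=
  log2 (1 + sqmod (Hsd f + Hrd f * Hsr f * effTheta alpha tau Th f) * P f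
              / ((sqmod (Hrd f * effTheta alpha tau Th f) + 1) * N0)).

Definition inew (P Xb : R -> R) f :=
  log2 (1 + (Num.sqrt (sqmod (Hsd f)) + Num.sqrt (sqmod (Hrd f * Hsr f)) * Xb f) ^+ 2 * P f
              / ((sqmod (Hrd f) * Xb f ^+ 2 + 1) * N0)).

Lemma rate_origE P Th : rate_orig fc W N0 Hsd Hsr Hrd alpha tau P Th =
  ((1 / (2 * W))%:E * integ D (iorig P Th))%E.
Proof. by []. Qed.

Lemma rate_newE P Xb : rate_new fc W N0 Hsd Hsr Hrd P Xb =
  ((1 / (2 * W))%:E * integ D (inew P Xb))%E.
Proof. by []. Qed.

Lemma m_iorig P Th : measurable_fun D P -> cmeasurable D Th -> measurable_fun D (iorig P Th).
Proof.
move=> mP mT; have mE := cm_eff mT; rewrite /iorig.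
apply: m_log2; apply: measurable_funD; first exact: measurable_cst.
apply: measurable_funM; first apply: measurable_funM => //.
  apply: m_sqmod; apply: cm_add => //; apply: cm_mul => //; exact: cm_mul.
apply: m_inv; apply: measurable_funM; last exact: measurable_cst.
apply: measurable_funD; last exact: measurable_cst.
by apply: m_sqmod; apply: cm_mul.
Qed.

Lemma m_inew P Xb : measurable_fun D P -> measurable_fun D Xb -> measurable_fun D (inew P Xb).
Proof.
move=> mP mX; rewrite /inew.
apply: m_log2; apply: measurable_funD; first exact: measurable_cst.
apply: measurable_funM; first apply: measurable_funM => //.
  apply: measurable_funX; apply: measurable_funD.
    by apply: m_sqrt; apply: m_sqmod; exact: mHsd.
  by apply: measurable_funM => //; apply: m_sqrt; apply: m_sqmod; exact: cm_mul.
apply: m_inv; apply: measurable_funM; last exact: measurable_cst.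
apply: measurable_funD; last exact: measurable_cst.
by apply: measurable_funM; [exact: m_sqmod | exact: measurable_funX].
Qed.

Lemma c_ge0 : (0 <= (1 / (2 * W))%:E)%E.
Proof. by rewrite lee_fin divr_ge0 // mulr_ge0 // ltW. Qed.

Lemma dir1 : (C_orig fc W N0 Pbar Qbar Hsd Hsr Hrd alpha tau <= C_new fc W N0 Pbar Qbar Hsd Hsr Hrd)%E.
Proof.
apply: ge_ereal_sup => _ [[P Th] /= [mP mT hPl hPb hQ] <-].
pose Xb f := nrm (effTheta alpha tau Th f).
have mX : measurable_fun D Xb by apply: m_sqrt; apply: m_sqmod; exact: cm_eff.
apply: (le_trans _ (ereal_sup_ubound _)); last first.
  exists (P, Xb) => //=; split => //.
  - by move=> f Df; split; [exact: (hPl f Df).1 | exact: nrm_ge0].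
  - rewrite (@integ_ext _ (fun f => sqmod (effTheta alpha tau Th f) * (sqmod (Hsr f) * P f + N0))) //.
    by move=> f _; rewrite /Xb nrm_sqr.
rewrite rate_origE rate_newE; apply: lee_wpmul2l; first exact: c_ge0.
apply: integ_le.
- exact: m_iorig.
- exact: m_inew.
- move=> f Df; apply: log2_ge0; apply: frac_ge0; [exact: sqmod_ge0|exact: (hPl f Df).1|].
  by apply: den_gt0 => //; exact: sqmod_ge0.
move=> f Df; rewrite /iorig /inew.
set e := effTheta alpha tau Th f.
have -> : sqmod (Hrd f * e) = sqmod (Hrd f) * Xb f ^+ 2 by rewrite sqmodM /Xb nrm_sqr.
have Dn : 0 < (sqmod (Hrd f) * Xb f ^+ 2 + 1) * N0.
  by apply: den_gt0 => //; apply: mulr_ge0; [exact: sqmod_ge0|exact: sqr_ge0].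
apply: log2_le; first by apply: frac_ge0 => //; [exact: sqmod_ge0|exact: (hPl f Df).1].
apply: frac_le => //; first exact: (hPl f Df).1.
apply: (le_trans (tri _ _)).
by rewrite nrmM.
Qed.


Definition Kc f := Hrd f * Hsr f.

Lemma cm_ualign : cmeasurable D (fun f => ualign (Hsd f) (Kc f)).
Proof.
have mw : cmeasurable D (fun f => Hsd f * cj (Kc f)).
  apply: cm_mul => //; apply: cm_conj; exact: cm_mul.
have mn : measurable_fun D (fun f => nrm (Hsd f * cj (Kc f))).
  by apply: m_sqrt; apply: m_sqmod.
rewrite /ualign; apply: cm_add.
  apply: cm_mul => //; apply: cm_real; exact: m_inv.
apply: cm_real; apply: measurable_funB; first exact: measurable_cst.
by apply: measurable_funM => //; exact: m_inv.
Qed.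

Section Dir2.
Variables (P Xb : R -> R).
Hypotheses (mP : measurable_fun D P) (mX : measurable_fun D Xb)
  (hPX : forall f, D f -> 0 <= P f /\ 0 <= Xb f)
  (hPb : (integ D P <= Pbar%:E)%E)
  (hQ : (integ D (fun f => (Xb f ^+ 2 * (sqmod (Hsr f) * P f + N0))%R) <= Qbar%:E)%E).

Let u f := ualign (Hsd f) (Kc f).
Let e0 f := u f * rc (Xb f).
Let q f := 1 + ahat alpha tau f * e0 f.
Let beta f := 1 - nrm (q f) * (nrm (q f))^-1.
Let t n f := 1 - beta f * (n.+1%:R)^-1.
Let eff n f := u f * rc (Xb f * t n f).
Let Th n f := eff n f / (1 + ahat alpha tau f * eff n f).

Lemma beta01 f : (q f = 0 /\ beta f = 1) \/ (q f != 0 /\ beta f = 0).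
Proof.
have [q0|q0] := eqVneq (q f) 0.
  left; split => //; rewrite /beta q0 /nrm.
  have -> : sqmod (0 : R[i]) = 0 by rewrite /sqmod /cre /cim /= expr0n addr0.
  by rewrite sqrtr0 mul0r subr0.
right; split => //; rewrite /beta mulfV ?subrr //.
apply/eqP => /eqP; rewrite sqrtr_eq0 => h.
move/negP: q0; apply; apply/eqP; apply: sqmod_eq0.
by apply/eqP; rewrite eq_le h sqmod_ge0.
Qed.

Lemma t_bounds n f : 0 <= t n f <= 1.
Proof.
have hn : 0 < (n.+1%:R : R)^-1 by rewrite invr_gt0 ltr0n.
have hn1 : (n.+1%:R : R)^-1 <= 1 by rewrite invf_le1 ?ltr0n // ler1n.
rewrite /t; case: (beta01 f) => [[_ ->]|[_ ->]]; last by rewrite mul0r subr0 lexx ler01.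
by rewrite mul1r subr_ge0 hn1 lerBlDr lerDl ltW.
Qed.

Lemma eff_nz n f : 1 + ahat alpha tau f * eff n f != 0.
Proof.
case: (beta01 f) => [[q0 b1]|[q0 b0]].
  have he : eff n f = e0 f * rc (t n f) by rewrite /eff /e0 rcM mulrA.
  have h1 : ahat alpha tau f * e0 f = -1 by apply/eqP; rewrite -subr_eq0 opprK addrC; apply/eqP.
  rewrite he mulrA h1 mulN1r /t b1 mul1r.
  have -> : 1 - rc (1 - (n.+1%:R)^-1) = rc ((n.+1%:R : R)^-1).
    by rewrite rcD -rc1 /rc /=; simpc; congr Complex; ring.
  apply/eqP => /(congr1 (@cre R)) /=; rewrite /cre /= => /eqP; rewrite invr_eq0 pnatr_eq0 //.
have -> : eff n f = e0 f by rewrite /eff /t b0 mul0r subr0 mulr1.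
exact: q0.
Qed.

Lemma Th_loop n f : loop_ok alpha tau (Th n) f.
Proof.
rewrite /loop_ok /Th; have nz := eff_nz n f.
have -> : 1 - ahat alpha tau f * (eff n f / (1 + ahat alpha tau f * eff n f))
    = (1 + ahat alpha tau f * eff n f)^-1 by field.
by rewrite invr_eq0.
Qed.

Lemma Th_eff n f : effTheta alpha tau (Th n) f = eff n f.
Proof.
rewrite /effTheta /Th; have nz := eff_nz n f.
have h : 1 - ahat alpha tau f * (eff n f / (1 + ahat alpha tau f * eff n f))
    = (1 + ahat alpha tau f * eff n f)^-1 by field.
rewrite h; field; exact: nz.
Qed.

Lemma mbeta : measurable_fun D beta.
Proof.
have mq : cmeasurable D q.
  apply: cm_add; first exact: cm_cst.
  apply: cm_mul; first exact: cm_ahat.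
  by apply: cm_mul; [exact: cm_ualign | exact: cm_real].
have mn : measurable_fun D (fun f => nrm (q f)) by apply: m_sqrt; apply: m_sqmod.
apply: measurable_funB; first exact: measurable_cst.
by apply: measurable_funM => //; exact: m_inv.
Qed.

Lemma mt n : measurable_fun D (t n).
Proof.
apply: measurable_funB; first exact: measurable_cst.
by apply: measurable_funM; [exact: mbeta | exact: measurable_cst].
Qed.

Lemma cm_effn n : cmeasurable D (eff n).
Proof.
apply: cm_mul; first exact: cm_ualign.
by apply: cm_real; apply: measurable_funM => //; exact: mt.
Qed.

Lemma cm_Th n : cmeasurable D (Th n).
Proof.
apply: cm_mul; first exact: cm_effn.
apply: cm_inv; apply: cm_add; first exact: cm_cst.
by apply: cm_mul; [exact: cm_ahat | exact: cm_effn].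
Qed.

Lemma sqmod_eff n f : sqmod (eff n f) = (Xb f * t n f) ^+ 2.
Proof. by rewrite /eff sqmodM sqmod_ualign mul1r sqmod_rc. Qed.

Definition phi f s := log2 (1 + (nrm (Hsd f) + nrm (Kc f) * (Xb f * s)) ^+ 2 * P f
   / ((sqmod (Hrd f) * (Xb f * s) ^+ 2 + 1) * N0)).

Lemma iorig_Th n f : D f -> iorig P (Th n) f = phi f (t n f).
Proof.
move=> Df; have [_ X0] := hPX Df; have /andP[t0 _] := t_bounds n f.
rewrite /iorig /phi Th_eff.
have -> : Hrd f * Hsr f * eff n f = Kc f * (ualign (Hsd f) (Kc f) * rc (Xb f * t n f)) by [].
rewrite align; last exact: mulr_ge0.
by rewrite /eff sqmod_ualign_mul.
Qed.

Lemma inew_phi f : inew P Xb f = phi f 1.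
Proof. by rewrite /inew /phi mulr1. Qed.

Lemma phi_ge0 f s : D f -> 0 <= phi f s.
Proof.
move=> Df; have [P0 _] := hPX Df.
apply: log2_ge0; apply: frac_ge0 => //; first exact: sqr_ge0.
by apply: den_gt0 => //; apply: mulr_ge0; [exact: sqmod_ge0 | exact: sqr_ge0].
Qed.

Lemma feas_Th n : feasible_orig fc W N0 Pbar Qbar Hsr alpha tau P (Th n).
Proof.
split => //.
- exact: cm_Th.
- by move=> f Df; split; [exact: (hPX Df).1 | exact: Th_loop].
apply: le_trans hQ.
rewrite (@integ_ext (fun f => sqmod (effTheta alpha tau (Th n) f) * (sqmod (Hsr f) * P f + N0))
   (fun f => (Xb f * t n f) ^+ 2 * (sqmod (Hsr f) * P f + N0))); last first.
  by move=> f _; rewrite Th_eff sqmod_eff.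
have mk : measurable_fun D (fun f => sqmod (Hsr f) * P f + N0).
  apply: measurable_funD; last exact: measurable_cst.
  by apply: measurable_funM => //; exact: m_sqmod.
apply: integ_le.
- apply: measurable_funM => //; apply: measurable_funX; apply: measurable_funM => //; exact: mt.
- by apply: measurable_funM => //; apply: measurable_funX.
- move=> f Df; apply: mulr_ge0; first exact: sqr_ge0.
  by apply: addr_ge0; [apply: mulr_ge0; [exact: sqmod_ge0|exact: (hPX Df).1] | exact: ltW].
move=> f Df; have [P0 X0] := hPX Df; have /andP[t0 t1] := t_bounds n f.
apply: ler_wpM2r.
  by apply: addr_ge0; [apply: mulr_ge0; [exact: sqmod_ge0|exact: P0] | exact: ltW].
rewrite exprMn; apply: ler_piMr; first exact: sqr_ge0.
by rewrite expr_le1.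
Qed.

Lemma dir2_elem : (rate_new fc W N0 Hsd Hsr Hrd P Xb <= C_orig fc W N0 Pbar Qbar Hsd Hsr Hrd alpha tau)%E.
Proof.
set c := 1 / (2 * W).
have mD' := mD.
have c0 : 0 <= c by rewrite /c divr_ge0 // mulr_ge0 // ltW.
have mphi n : measurable_fun D (fun f => phi f (t n f)).
  move: (m_iorig mP (cm_Th n)); apply: eq_measurable_fun.
  by move=> f; rewrite inE => Df; exact: iorig_Th.
have mphi1 : measurable_fun D (fun f => phi f 1).
  move: (m_inew mP mX); apply: eq_measurable_fun.
  by move=> f _; exact: inew_phi.
pose F n f := (c * phi f (t n f))%:E.
have mF n : measurable_fun D (F n).
  by apply/measurable_EFinP; apply: measurable_funM => //; exact: measurable_cst.
have F0 n f : D f -> (0 <= F n f)%E.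
  by move=> Df; rewrite lee_fin mulr_ge0 // phi_ge0.
have := @fatou _ _ _ lebesgue_measure D mD F mF F0.
have -> : (\int[lebesgue_measure]_(x in D) limn_einf (F^~ x)
    = \int[lebesgue_measure]_(x in D) (c%:E * (phi x 1)%:E))%E.
  apply: eq_integral => x; rewrite inE => Dx.
  rewrite -EFinM; apply: limn_einf_cvg.
  apply: cvg_EFin; first by apply: nearW.
  apply: cvgMl_tmp.
  have [P0 _] := hPX Dx.
  apply: cvg_phi => //; first exact: sqmod_ge0.
  rewrite [X in _ --> X](_ : 1 = 1 - beta x * 0); last by rewrite mulr0 subr0.
  apply: cvgB; first exact: cvg_cst.
  apply: cvgMl_tmp; exact: (@cvg_harmonic R).
rewrite ge0_integralZl_EFin //; last 2 first.
- by move=> x Dx; rewrite lee_fin phi_ge0.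
- exact/measurable_EFinP.
move=> h; apply: (le_trans _ (le_trans h _)).
  rewrite rate_newE; apply: lee_wpmul2l; first by rewrite lee_fin.
  by rewrite le_eqVlt; apply/orP; left; apply/eqP; apply: integ_ext => f _; exact: inew_phi.
apply: limn_einf_le => n.
have -> : (\int[lebesgue_measure]_(x in D) F n x = rate_orig fc W N0 Hsd Hsr Hrd alpha tau P (Th n))%E.
  rewrite rate_origE /F.
  under eq_integral do rewrite EFinM.
  rewrite ge0_integralZl_EFin //; last 2 first.
  - by move=> x Dx; rewrite lee_fin phi_ge0.
  - by apply/measurable_EFinP; exact: (mphi n).
  congr (_ * _)%E; apply: integ_ext => f; rewrite inE => Df.
  by rewrite iorig_Th.
rewrite /C_orig; apply: ereal_sup_ubound; exists (P, Th n) => //=.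
exact: feas_Th.
Qed.

End Dir2.

Lemma dir2 : (C_new fc W N0 Pbar Qbar Hsd Hsr Hrd <= C_orig fc W N0 Pbar Qbar Hsd Hsr Hrd alpha tau)%E.
Proof.
apply: ge_ereal_sup => _ [[P Xb] /= [mP mX hPX hPb hQ] <-].
exact: dir2_elem.
Qed.

End Main.

Theorem mainTheorem3 (R : realType) (fc W N0 Pbar Qbar alpha tau : R)
    (Hsd Hsr Hrd : R -> R[i]) :
  0 < W -> 0 < N0 -> alpha < 1 -> 0 < tau ->
  cmeasurable (Omega fc W) Hsd ->
  cmeasurable (Omega fc W) Hsr ->
  cmeasurable (Omega fc W) Hrd ->
  C_orig fc W N0 Pbar Qbar Hsd Hsr Hrd alpha tau = C_new fc W N0 Pbar Qbar Hsd Hsr Hrd.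
Proof.
move=> W0 N00 _ _ mHsd mHsr mHrd.
apply/le_anti/andP; split.
- exact: dir1.
- exact: dir2.
Qed.
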